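(* Let $N\ge 2$ be an integer, let $C>0$, and let $q,s,k\in[0,1]$ with $q>s$. Define $\Phi:[0,1]\to[0,1]$ by $$\Phi(b,0)=\frac{[qb+s(1-b)](1-k)}{[qb+s(1-b)](1-k)+[(1-q)b+(1-s)(1-b)]}=\frac{[qb+s(1-b)](1-k)}{1-[qb+s(1-b)]k},$$ and define functions $J_l,A_l:[0,1]\to\mathbb{R}$ by backward recursion: $J_{N-1}(b)=(1-kb)C$, and for $l=N-2,N-3,\dots,0$, $$A_l(b)=(1-kb)C+\big(bq+(1-b)s\big)k\,J_{l+1}(1)+\big(1-(bq+(1-b)s)k\big)\,J_{l+1}(\Phi(b,0)),\qquad J_l(b)=\min\{C,A_l(b)\}.$$ Then for each $l\in\{0,1,\dots,N-2\}$, the function $b\mapsto A_l(b)$ is piecewise linear and concave on $[0,1]$.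
   Context: This is the dynamic program of a finite-horizon POMDP for relay selection: $b\in[0,1]$ is the belief (conditional probability given past acknowledgement history) that the current relay link is good; $q$ is the probability a good link stays good, $s$ the probability a bad link becomes good, $k$ the probability an acknowledgement is received when the link is good (it is never received when the link is bad); $C$ is the penalty for a packet loss or for exploring and switching; $\Phi(b,0)$ is the Bayesian belief update after an acknowledgement failure (after an acknowledgement success the belief becomes $1$). $J_l$ is the optimal expected cost-to-go at time $l$, $C$ is the cost of exploring/switching, and $A_l$ is the expected cost of continuing on the current link. *)

(* Defs.v *)
From Stdlib Require Import Reals Lra.
Open Scope R_scope.

(* Bayesian belief update after an acknowledgement failure, Phi(b,0). *)
Definition Phi (q s k b : R) : R :=
  ((q * b + s * (1 - b)) * (1 - k)) /
  ((q * b + s * (1 - b)) * (1 - k) + ((1 - q) * b + (1 - s) * (1 - b))).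

(* Jrec n = J_{N-1-n}  (n = number of remaining backward steps). *)
Fixpoint Jrec (C q s k : R) (n : nat) (b : R) {struct n} : R :=
  match n with
  | O => (1 - k * b) * C
  | S m =>
      Rmin C ((1 - k * b) * C
              + (b * q + (1 - b) * s) * k * Jrec C q s k m 1
              + (1 - (b * q + (1 - b) * s) * k) * Jrec C q s k m (Phi q s k b))
  end.

Definition J (N : nat) (C q s k : R) (l : nat) (b : R) : R :=
  Jrec C q s k (N - 1 - l) b.

(* A_l for horizon N (meaningful for l <= N-2): uses J_{l+1}. *)
Definition A (N : nat) (C q s k : R) (l : nat) (b : R) : R :=
  (1 - k * b) * C
  + (b * q + (1 - b) * s) * k * J N C q s k (S l) 1
  + (1 - (b * q + (1 - b) * s) * k) * J N C q s k (S l) (Phi q s k b).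

Definition piecewise_linear01 (f : R -> R) : Prop :=
  exists (n : nat) (x a c : nat -> R),
    x O = 0 /\ x n = 1 /\
    (forall i, (i < n)%nat -> x i < x (S i)) /\
    (forall i, (i < n)%nat -> forall b, x i <= b <= x (S i) -> f b = a i * b + c i).

Definition concave01 (f : R -> R) : Prop :=
  forall x y t, 0 <= x <= 1 -> 0 <= y <= 1 -> 0 <= t <= 1 ->
    t * f x + (1 - t) * f y <= f (t * x + (1 - t) * y).

(* Main.v *)
Require Import Defs.
From Stdlib Require Import Reals Lra Lia Psatz.
Open Scope R_scope.


Inductive MA (f : R -> R) : Prop :=
| MA_aff a c : (forall x, 0<=x<=1 -> f x = a*x+c) -> MA f
| MA_min g a c : MA g -> (forall x, 0<=x<=1 -> f x = Rmin (g x) (a*x+c)) -> MA f.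

Lemma Rmin_plus_r a b e : Rmin a b + e = Rmin (a+e) (b+e).
Proof. unfold Rmin; destruct (Rle_dec a b); destruct (Rle_dec (a+e) (b+e)); lra. Qed.

Lemma Rmin_mult_l a b t : 0 <= t -> t * Rmin a b = Rmin (t*a) (t*b).
Proof. intros Ht. unfold Rmin; destruct (Rle_dec a b); destruct (Rle_dec (t*a) (t*b)); try nra.
Qed.

Lemma MA_ext f g : MA f -> (forall x, 0<=x<=1 -> f x = g x) -> MA g.
Proof. intros [a c H|h a c Hh H] E.
 - apply (MA_aff g a c); intros x Hx; rewrite <- E by auto; auto.
 - apply (MA_min g h a c Hh); intros x Hx; rewrite <- E by auto; auto. Qed.

Lemma MA_plus f a c : MA f -> MA (fun x => f x + (a*x+c)).
Proof. intros H; induction H as [f a0 c0 H|f g a0 c0 Hg IH H].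
 - apply (MA_aff _ (a0+a) (c0+c)); intros x Hx; rewrite H by auto; ring.
 - apply (MA_min _ _ (a0+a) (c0+c) IH); intros x Hx; rewrite H by auto.
   rewrite Rmin_plus_r. f_equal. ring. Qed.

Lemma MA_concave f : MA f -> concave01 f.
Proof. intros H; induction H as [f a0 c0 H|f g a0 c0 Hg IH H]; intros x y t Hx Hy Ht.
 - assert (0 <= t*x+(1-t)*y <= 1) by nra. rewrite !H by auto. nra.
 - assert (0 <= t*x+(1-t)*y <= 1) by nra. rewrite !H by auto.
   specialize (IH x y t Hx Hy Ht).
   pose proof (Rmin_l (g x) (a0*x+c0)). pose proof (Rmin_r (g x) (a0*x+c0)).
   pose proof (Rmin_l (g y) (a0*y+c0)). pose proof (Rmin_r (g y) (a0*y+c0)).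
   unfold Rmin at 3; destruct (Rle_dec _ _); nra. Qed.

Section S.
Variables q s k : R.
Hypotheses (Hq : 0 <= q <= 1) (Hs : 0 <= s <= 1) (Hk : 0 <= k <= 1).

Lemma Phi_key b : 0 <= b <= 1 ->
  (1 - (b*q+(1-b)*s)*k) * Phi q s k b = (q*b+s*(1-b))*(1-k).
Proof. intros Hb. unfold Phi.
 set (p := q*b+s*(1-b)).
 assert (Hp : 0 <= p <= 1) by (unfold p; nra).
 replace (p*(1-k) + ((1-q)*b+(1-s)*(1-b))) with (1 - p*k) by (unfold p; ring).
 replace (b*q+(1-b)*s) with p by (unfold p; ring).
 destruct (Req_dec (1-p*k) 0) as [E|E].
 - rewrite E. assert (p = 1 /\ k = 1) as [-> ->] by nra. ring.
 - field. auto. Qed.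

Lemma Phi_range b : 0 <= b <= 1 -> 0 <= Phi q s k b <= 1.
Proof. intros Hb. unfold Phi.
 set (p := q*b+s*(1-b)).
 assert (Hp : 0 <= p <= 1) by (unfold p; nra).
 set (d := (1-q)*b+(1-s)*(1-b)).
 assert (0 <= d) by (unfold d; nra).
 assert (0 <= p*(1-k)) by nra.
 destruct (Req_dec (p*(1-k)+d) 0) as [E|E].
 - rewrite E. unfold Rdiv. rewrite Rinv_0. lra.
 - assert (0 < p*(1-k)+d) by lra.
   pose proof (Rinv_0_lt_compat _ H1). pose proof (Rinv_r _ E).
   unfold Rdiv. split; nra. Qed.

Lemma MA_persp f : MA f ->
  MA (fun b => (1 - (b*q+(1-b)*s)*k) * f (Phi q s k b)).
Proof. intros H; induction H as [f a0 c0 H|f g a0 c0 Hg IH H].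
 - apply (MA_aff _ (a0*(q-s)*(1-k) - c0*(q-s)*k) (a0*s*(1-k)+c0*(1-s*k))).
   intros x Hx. rewrite H by (apply Phi_range; auto).
   rewrite Rmult_plus_distr_l, <- Rmult_assoc, (Rmult_comm _ a0), Rmult_assoc,
     Phi_key by auto. ring.
 - apply (MA_min _ _ (a0*(q-s)*(1-k) - c0*(q-s)*k) (a0*s*(1-k)+c0*(1-s*k)) IH).
   intros x Hx. rewrite H by (apply Phi_range; auto).
   assert (0 <= x*q+(1-x)*s <= 1) by nra.
   rewrite Rmin_mult_l by nra. f_equal.
   rewrite Rmult_plus_distr_l, <- Rmult_assoc, (Rmult_comm _ a0), Rmult_assoc,
     Phi_key by auto. ring. Qed.

Lemma MA_step C (g : R -> R) : MA g ->
  MA (fun b => (1 - k * b) * C + (b * q + (1 - b) * s) * k * g 1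
              + (1 - (b * q + (1 - b) * s) * k) * g (Phi q s k b)).
Proof. intros H. apply MA_ext with
  (fun b => (1 - (b*q+(1-b)*s)*k) * g (Phi q s k b) + (((q-s)*k*g 1 - k*C)*b + (C + s*k*g 1))).
 - apply MA_plus, MA_persp, H.
 - intros x _. ring. Qed.

Lemma MA_Jrec C n : MA (Jrec C q s k n).
Proof. induction n as [|m IH]; simpl.
 - apply (MA_aff _ (-k*C) C). intros; ring.
 - apply (MA_min _ _ 0 C (MA_step C _ IH)). intros x _.
   rewrite Rmin_comm. f_equal; ring. Qed.
End S.

Inductive PL (f : R -> R) : R -> R -> Prop :=
| PL_aff u v a c : u < v -> (forall b, u<=b<=v -> f b = a*b+c) -> PL f u v
| PL_cat u w v : PL f u w -> PL f w v -> PL f u v.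

Lemma PL_lt f u v : PL f u v -> u < v.
Proof. induction 1; lra. Qed.

Lemma PL_ext f u v : PL f u v -> forall g, (forall x, u<=x<=v -> f x = g x) -> PL g u v.
Proof. induction 1 as [u v a c Huv H|u w v H1 IH1 H2 IH2]; intros g E.
 - apply (PL_aff g u v a c Huv). intros b Hb. rewrite <- E by auto. auto.
 - pose proof (PL_lt _ _ _ H1); pose proof (PL_lt _ _ _ H2).
   apply (PL_cat g u w v).
   + apply IH1. intros; apply E; lra.
   + apply IH2. intros; apply E; lra. Qed.

Lemma aff_nonneg al be u v x : u <= x <= v -> u < v ->
  0 <= al*u+be -> 0 <= al*v+be -> 0 <= al*x+be.
Proof. intros Hx Huv H1 H2.
 assert ((al*x+be)*(v-u) = (al*u+be)*(v-x) + (al*v+be)*(x-u)) by ring.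
 assert (0 <= (al*x+be)*(v-u)) by nra. nra. Qed.

Lemma PL_min2 u v a1 c1 a c : u < v ->
  PL (fun x => Rmin (a1*x+c1) (a*x+c)) u v.
Proof. intros Huv.
 set (al := a1 - a). set (be := c1 - c).
 assert (Hd : forall x, a1*x+c1 - (a*x+c) = al*x+be) by (intros; unfold al, be; ring).
 assert (L1 : forall x, 0 <= al*x+be -> Rmin (a1*x+c1) (a*x+c) = a*x+c).
 { intros x Hx. apply Rmin_right. specialize (Hd x). lra. }
 assert (L2 : forall x, al*x+be <= 0 -> Rmin (a1*x+c1) (a*x+c) = a1*x+c1).
 { intros x Hx. apply Rmin_left. specialize (Hd x). lra. }
 destruct (Rle_dec 0 (al*u+be)) as [Hu|Hu]; destruct (Rle_dec 0 (al*v+be)) as [Hv|Hv].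
 - apply (PL_aff _ u v a c Huv). intros x Hx. apply L1. apply (aff_nonneg al be u v); auto.
 - destruct (Req_dec (al*u+be) 0) as [E0|E0].
   { apply (PL_aff _ u v a1 c1 Huv). intros x Hx. apply L2.
     pose proof (aff_nonneg (-al) (-be) u v x Hx Huv). lra. }
   set (t := u + (al*u+be)*(v-u)/((al*u+be)-(al*v+be))).
   assert (Ht : u < t < v /\ al*t+be = 0).
   { unfold t. assert (0 < (al*u+be)-(al*v+be)) by lra.
     assert (0 < al*u+be) by lra.
     pose proof (Rinv_0_lt_compat _ H). pose proof (Rinv_r _ (Rgt_not_eq _ _ H)).
     unfold Rdiv. set (I := / _) in *. set (du := al*u+be) in *. set (dv := al*v+be) in *.
     assert (Hal : al*(v-u) = dv - du) by (unfold du, dv; ring).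
     assert (0 < du*(v-u)*I) by (apply Rmult_lt_0_compat; [apply Rmult_lt_0_compat|]; lra).
     assert (0 < (-dv)*(v-u)*I) by (apply Rmult_lt_0_compat; [apply Rmult_lt_0_compat|]; lra).
     repeat split.
     - lra.
     - assert (v - (u + du*(v-u)*I) = (-dv)*(v-u)*I + (v-u)*(1 - (du-dv)*I)) by ring.
       rewrite H2 in H5. lra.
     - replace (al*(u+du*(v-u)*I)+be) with (du + du*(al*(v-u))*I) by (unfold du; ring).
       rewrite Hal. replace (du + du*(dv-du)*I) with (du*(1 - (du-dv)*I)) by ring.
       rewrite H2. ring. }
   destruct Ht as [[Ht1 Ht2] Ht3].
   apply (PL_cat _ u t v).
   + apply (PL_aff _ u t a c Ht1). intros x Hx. apply L1.
     apply (aff_nonneg al be u t); lra.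
   + apply (PL_aff _ t v a1 c1 Ht2). intros x Hx. apply L2.
     pose proof (aff_nonneg (-al) (-be) t v x Hx Ht2). lra.
 - destruct (Req_dec (al*v+be) 0) as [E0|E0].
   { apply (PL_aff _ u v a1 c1 Huv). intros x Hx. apply L2.
     pose proof (aff_nonneg (-al) (-be) u v x Hx Huv). lra. }
   set (t := u + (al*u+be)*(v-u)/((al*u+be)-(al*v+be))).
   assert (Ht : u < t < v /\ al*t+be = 0).
   { unfold t. assert ((al*u+be)-(al*v+be) < 0) by lra.
     assert (0 < -((al*u+be)-(al*v+be))) by lra.
     pose proof (Rinv_r _ (Rlt_not_eq _ _ H)).
     unfold Rdiv. set (I := / _) in *. set (du := al*u+be) in *. set (dv := al*v+be) in *.
     assert (HI : -I = / (-(du-dv))) by (unfold I; rewrite Rinv_opp; reflexivity).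
     pose proof (Rinv_0_lt_compat _ H0). rewrite <- HI in H2.
     assert (Hal : al*(v-u) = dv - du) by (unfold du, dv; ring).
     assert (0 < (-du)*(v-u)*(-I)) by (apply Rmult_lt_0_compat; [apply Rmult_lt_0_compat|]; lra).
     assert (0 < dv*(v-u)*(-I)) by (apply Rmult_lt_0_compat; [apply Rmult_lt_0_compat|]; lra).
     repeat split.
     - assert (du*(v-u)*I = (-du)*(v-u)*(-I)) by ring. lra.
     - assert (v - (u + du*(v-u)*I) = dv*(v-u)*(-I) + (v-u)*(1 - (du-dv)*I)) by ring.
       rewrite H1 in H5. lra.
     - replace (al*(u+du*(v-u)*I)+be) with (du + du*(al*(v-u))*I) by (unfold du; ring).
       rewrite Hal. replace (du + du*(dv-du)*I) with (du*(1 - (du-dv)*I)) by ring.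
       rewrite H1. ring. }
   destruct Ht as [[Ht1 Ht2] Ht3].
   apply (PL_cat _ u t v).
   + apply (PL_aff _ u t a1 c1 Ht1). intros x Hx. apply L2.
     pose proof (aff_nonneg (-al) (-be) u t x Hx Ht1). lra.
   + apply (PL_aff _ t v a c Ht2). intros x Hx. apply L1.
     apply (aff_nonneg al be t v); lra.
 - apply (PL_aff _ u v a1 c1 Huv). intros x Hx. apply L2.
   pose proof (aff_nonneg (-al) (-be) u v x Hx Huv). lra. Qed.

Lemma PL_min g u v a c : PL g u v -> PL (fun x => Rmin (g x) (a*x+c)) u v.
Proof. induction 1 as [u v a1 c1 Huv H|u w v H1 IH1 H2 IH2].
 - apply PL_ext with (fun x => Rmin (a1*x+c1) (a*x+c)).
   + apply PL_min2; auto.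
   + intros x Hx. rewrite H by auto. auto.
 - apply (PL_cat _ u w v); auto. Qed.

Lemma MA_PL f : MA f -> PL f 0 1.
Proof. induction 1 as [f a0 c0 H|f g a0 c0 Hg IH H].
 - apply (PL_aff f 0 1 a0 c0); auto; lra.
 - apply PL_ext with (fun x => Rmin (g x) (a0*x+c0)).
   + apply PL_min; auto.
   + intros x Hx; rewrite H; auto. Qed.

Lemma PL_seq f u v : PL f u v ->
  exists (n : nat) (x a c : nat -> R),
    x O = u /\ x n = v /\
    (forall i, (i < n)%nat -> x i < x (S i)) /\
    (forall i, (i < n)%nat -> forall b, x i <= b <= x (S i) -> f b = a i * b + c i).
Proof. induction 1 as [u v a0 c0 Huv H|u w v H1 IH1 H2 IH2].
 - exists 1%nat, (fun i => match i with O => u | _ => v end), (fun _ => a0), (fun _ => c0).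
   repeat split; auto.
   + intros i Hi. replace i with O by lia. auto.
   + intros i Hi b Hb. replace i with O in Hb by lia. auto.
 - destruct IH1 as (n1 & x1 & a1 & c1 & X0 & Xn & Inc & Pc).
   destruct IH2 as (n2 & x2 & a2 & c2 & Y0 & Yn & Inc2 & Pc2).
   pose proof (PL_lt _ _ _ H1); pose proof (PL_lt _ _ _ H2).
   assert (n1 <> O) by (intro; subst; lra).
   assert (n2 <> O) by (intro; subst; lra).
   exists (n1+n2)%nat,
     (fun i => if (i <=? n1)%nat then x1 i else x2 (i - n1)%nat),
     (fun i => if (i <? n1)%nat then a1 i else a2 (i - n1)%nat),
     (fun i => if (i <? n1)%nat then c1 i else c2 (i - n1)%nat).
   repeat split.
   + simpl. auto.
   + destruct (Nat.leb_spec (n1+n2) n1); [lia|]. replace (n1+n2-n1)%nat with n2 by lia. auto.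
   + intros i Hi.
     destruct (Nat.leb_spec i n1); destruct (Nat.leb_spec (S i) n1).
     * apply Inc; lia.
     * assert (i = n1) by lia. subst i. rewrite Xn.
       replace (S n1 - n1)%nat with 1%nat by lia. rewrite <- Y0. apply Inc2; lia.
     * lia.
     * replace (S i - n1)%nat with (S (i - n1)) by lia. apply Inc2; lia.
   + intros i Hi b Hb.
     destruct (Nat.ltb_spec i n1).
     * destruct (Nat.leb_spec i n1); [|lia]. destruct (Nat.leb_spec (S i) n1); [|lia].
       apply Pc; auto.
     * destruct (Nat.leb_spec (S i) n1); [lia|].
       replace (S i - n1)%nat with (S (i - n1)) in Hb by lia.
       apply Pc2; [lia|].
       destruct (Nat.leb_spec i n1).
       -- assert (i = n1) by lia. subst i. rewrite Nat.sub_diag, Y0, <- Xn.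
          rewrite Nat.sub_diag in Hb. exact Hb.
       -- exact Hb.
Qed.

Theorem proposition1 (N : nat) (C q s k : R) :
  (2 <= N)%nat -> 0 < C ->
  0 <= q <= 1 -> 0 <= s <= 1 -> 0 <= k <= 1 -> s < q ->
  forall l : nat, (l <= N - 2)%nat ->
    piecewise_linear01 (A N C q s k l) /\ concave01 (A N C q s k l).
Proof.
  intros _ _ Hq Hs Hk _ l _.
  assert (HM : MA (A N C q s k l)).
  { unfold A, J. apply MA_step; auto. apply MA_Jrec; auto. }
  split.
  - apply PL_seq. apply MA_PL; auto.
  - apply MA_concave; auto.
Qed.
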